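(* Let $S\subseteq\{1,\dots,p\}$ with $|S|=k$, $\delta\in(0,1]$, $R>0$, $\lambda>0$, $\alpha_1\ge\mu$, $\tau_1>0$. Let $\hat\theta,\tilde\theta\in\mathbb{R}^{p\times q}$ with $\|\hat\theta\|_{1,2}\le R$, $\|\tilde\theta\|_{1,2}\le R$, where all rows of $\hat\theta$ outside $S$ are zero, and put $\tilde\nu=\tilde\theta-\hat\theta$. Suppose there are $\hat z\in\partial\|\hat\theta\|_{1,2}$ and $\tilde z\in\partial\|\tilde\theta\|_{1,2}$ such that $\nabla\bar{\mathcal L}_n(\hat\theta)+\lambda\hat z=0$, $\langle\nabla\bar{\mathcal L}_n(\tilde\theta)+\lambda\tilde z,\hat\theta-\tilde\theta\rangle\ge0$, and $\|\hat z_{S^c}\|_{\infty,2}\le1-\delta$. Suppose also $$\langle\nabla\bar{\mathcal L}_n(\tilde\theta)-\nabla\bar{\mathcal L}_n(\hat\theta),\tilde\nu\rangle\ge(\alpha_1-\mu)\|\tilde\nu\|_F^2-\tau_1\frac{\log p}{n}\|\tilde\nu\|_{1,2}^2$$ and $\lambda\ge\frac{4R\tau_1q\log p}{\delta n}$. Then $$\|\tilde\nu\|_{1,2}\le\Big(\frac4\delta+2\Big)\sqrt k\,\|\tilde\nu\|_F.$$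
   Context: Notation: for $A\in\mathbb{R}^{p\times q}$, $A_{i:}$ row $i$; $A_S$, $A_{S^c}$ the submatrices of rows in $S$, resp. not in $S$; $\|A\|_{a,b}=(\sum_i\|A_{i:}\|_b^a)^{1/a}$ ($a=\infty$: max over $i$); $\|A\|_F$ Frobenius norm; $\langle A,B\rangle=\mathrm{tr}(A^TB)$. $\bar{\mathcal L}_n:\mathbb{R}^{p\times q}\to\mathbb{R}$ is a differentiable function (in the paper, $\bar{\mathcal L}_n(\theta)=\mathcal L_n(\theta)-\sum_i q_\lambda(\|\theta_{i:}\|_2)$ with $\mathcal L_n$ the multi-treatment least-squares loss and $q_\lambda(t)=\lambda|t|-\rho_\lambda(t)$). Subdifferential: $z\in\partial\|\theta\|_{1,2}$ iff $z_{i:}=\theta_{i:}/\|\theta_{i:}\|_2$ when $\theta_{i:}\ne0$ and $\|z_{i:}\|_2\le1$ when $\theta_{i:}=0$. *)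

(* Defs.v *)
From HB Require Import structures.
From mathcomp Require Import all_boot all_order all_algebra.
From mathcomp Require Import all_classical all_reals all_analysis.
Set Implicit Arguments. Unset Strict Implicit. Unset Printing Implicit Defensive.
Import Order.TTheory GRing.Theory Num.Theory.
Import numFieldNormedType.Exports.
Local Open Scope ring_scope.

Section Defs.
Variables (R : realType) (p q : nat).

Definition row2 (A : 'M[R]_(p, q)) (i : 'I_p) : R :=
  Num.sqrt (\sum_(j < q) A i j ^+ 2).

Definition norm12 (A : 'M[R]_(p, q)) : R := \sum_(i < p) row2 A i.

(* ||A_{S^c}||_{infty,2} = max_{i notin S} ||A_{i:}||_2 (0 if S^c empty) *)
Definition norminf2_out (S : {set 'I_p}) (A : 'M[R]_(p, q)) : R :=
  \big[Num.max/0]_(i < p | i \notin S) row2 A i.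

Definition frob (A : 'M[R]_(p, q)) : R :=
  Num.sqrt (\sum_(i < p) \sum_(j < q) A i j ^+ 2).

Definition inner (A B : 'M[R]_(p, q)) : R := \tr (A^T *m B).

(* z is in the subdifferential of ||.||_{1,2} at theta *)
Definition subgrad12 (theta z : 'M[R]_(p, q)) : Prop :=
  forall i : 'I_p,
    (row i theta != 0 -> row i z = (row2 theta i)^-1 *: row i theta) /\
    (row i theta = 0 -> row2 z i <= 1).

End Defs.

(* Main.v *)
Require Import Defs.
From HB Require Import structures.
From mathcomp Require Import all_boot all_order all_algebra.
From mathcomp Require Import all_classical all_reals all_analysis.
From mathcomp Require Import ring lra.
Import Order.TTheory GRing.Theory Num.Theory.
Import numFieldNormedType.Exports.
Local Open Scope ring_scope.
Section H.
Variable R : realType.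

Lemma sumsq_ge0 {I : finType} (P : pred I) (a : I -> R) :
  0 <= \sum_(i | P i) a i ^+ 2.
Proof. by apply: sumr_ge0 => i _; exact: sqr_ge0. Qed.

Lemma sumsq_eq0 {I : finType} (P : pred I) (a : I -> R) :
  \sum_(i | P i) a i ^+ 2 = 0 -> forall i, P i -> a i = 0.
Proof.
move=> h i Pi; have := psumr_eq0P (fun i _ => sqr_ge0 (a i)) h Pi.
by move/eqP; rewrite sqrf_eq0 => /eqP.
Qed.

Lemma cs {I : finType} (P : pred I) (a b : I -> R) :
  \sum_(i | P i) a i * b i <=
  Num.sqrt (\sum_(i | P i) a i ^+ 2) * Num.sqrt (\sum_(i | P i) b i ^+ 2).
Proof.
have A20 := sumsq_ge0 P a; have B20 := sumsq_ge0 P b.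
have hA := sqr_sqrtr A20; have hB := sqr_sqrtr B20.
move: hA hB.
set A2 := \sum_(i | P i) a i ^+ 2; set B2 := \sum_(i | P i) b i ^+ 2.
set A := Num.sqrt A2; set B := Num.sqrt B2 => hA hB.
have A0 : 0 <= A by exact: sqrtr_ge0.
have B0 : 0 <= B by exact: sqrtr_ge0.
have key : (2 * (A * B)) * \sum_(i | P i) a i * b i <= (2 * (A * B)) * (A * B).
  have -> : (2 * (A * B)) * (A * B) =
     \sum_(i | P i) (a i ^+ 2 * B ^+ 2 + b i ^+ 2 * A ^+ 2).
    rewrite big_split /= -!mulr_suml -/A2 -/B2 -{1}hA -{1}hB; ring.
  rewrite mulr_sumr; apply: ler_sum => i _.
  rewrite -subr_ge0.
  have -> : a i ^+ 2 * B ^+ 2 + b i ^+ 2 * A ^+ 2 - 2 * (A * B) * (a i * b i)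
      = (a i * B - b i * A) ^+ 2 by ring.
  exact: sqr_ge0.
case: (ltP 0 (A * B)) => [ABpos|AB0].
  have h2 : 0 < 2 * (A * B) by rewrite mulr_gt0.
  by rewrite ler_pM2l // in key.
have AB : A * B == 0 by rewrite eq_le AB0 mulr_ge0.
have [h0|h0] : A = 0 \/ B = 0.
  by move: AB; rewrite mulf_eq0 => /orP[] /eqP ->; [left|right].
  have a0 : A2 = 0 by rewrite -hA h0 expr0n.
  rewrite big1 ?h0 ?mul0r // => i Pi; by rewrite (sumsq_eq0 _ _ a0 i Pi) mul0r.
have b0 : B2 = 0 by rewrite -hB h0 expr0n.
rewrite big1 ?h0 ?mulr0 // => i Pi; by rewrite (sumsq_eq0 _ _ b0 i Pi) mulr0.
Qed.

Lemma mink {I : finType} (P : pred I) (a b : I -> R) :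
  Num.sqrt (\sum_(i | P i) (a i - b i) ^+ 2) <=
  Num.sqrt (\sum_(i | P i) a i ^+ 2) + Num.sqrt (\sum_(i | P i) b i ^+ 2).
Proof.
have h := cs P a (fun i => - b i).
have e : \sum_(i | P i) (- b i) ^+ 2 = \sum_(i | P i) b i ^+ 2.
  by apply: eq_bigr => i _; rewrite sqrrN.
rewrite e in h.
have A20 := sumsq_ge0 P a; have B20 := sumsq_ge0 P b.
have hA := sqr_sqrtr A20; have hB := sqr_sqrtr B20.
have A0 := sqrtr_ge0 (\sum_(i | P i) a i ^+ 2).
have B0 := sqrtr_ge0 (\sum_(i | P i) b i ^+ 2).
move: h hA hB A0 B0.
set A2 := \sum_(i | P i) a i ^+ 2; set B2 := \sum_(i | P i) b i ^+ 2.
set A := Num.sqrt A2; set B := Num.sqrt B2 => h hA hB A0 B0.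
have -> : \sum_(i | P i) (a i - b i) ^+ 2 =
   A2 + B2 + 2 * \sum_(i | P i) a i * - b i.
  rewrite /A2 /B2 mulr_sumr -!big_split /=; apply: eq_bigr => i _; ring.
rewrite -(ger0_norm (addr_ge0 A0 B0)) -sqrtr_sqr ler_sqrt ?sqr_ge0 //.
rewrite -hA -hB; nra.
Qed.

End H.

Section M.
Variables (R : realType) (p q : nat).
Implicit Types (A B M th z : 'M[R]_(p, q)).

Lemma inner_sum A B : inner A B = \sum_i \sum_j A i j * B i j.
Proof.
rewrite /inner /mxtrace exchange_big /=; apply: eq_bigr => j _.
rewrite mxE; apply: eq_bigr => i _; by rewrite mxE.
Qed.

Lemma row_entry M N (c : R) i j : row i M = c *: row i N -> M i j = c * N i j.
Proof. by move=> h; have := congr1 (fun X : 'M[R]_(1, q) => X 0 j) h; rewrite !mxE. Qed.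

Lemma row0_entry M i j : row i M = 0 -> M i j = 0.
Proof. by move=> h; have := congr1 (fun X : 'M[R]_(1, q) => X 0 j) h; rewrite !mxE. Qed.

Lemma row2_ge0 M i : 0 <= row2 M i.
Proof. exact: sqrtr_ge0. Qed.

Lemma row2_sq M i : row2 M i ^+ 2 = \sum_j M i j ^+ 2.
Proof. by rewrite /row2 sqr_sqrtr // sumsq_ge0. Qed.

Lemma row2_eq0 M i : row2 M i = 0 -> row i M = 0.
Proof.
move=> h; have h2 : \sum_j M i j ^+ 2 = 0 by rewrite -row2_sq h expr0n.
apply/rowP => j; rewrite !mxE. exact: (sumsq_eq0 _ _ _ h2 j isT).
Qed.

Lemma subgrad_dot th z i : subgrad12 th z ->
  \sum_j z i j * th i j = row2 th i.
Proof.
move=> /(_ i) [h1 h2]; have [e|ne] := eqVneq (row i th) 0.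
  rewrite big1; last by move=> j _; rewrite (row0_entry _ _ j e) mulr0.
  rewrite /row2 big1 ?sqrtr0 // => j _; by rewrite (row0_entry _ _ j e) expr0n.
have {}h1 := h1 ne.
have r0 : row2 th i != 0 by apply: contra ne => /eqP/row2_eq0 ->.
rewrite (eq_bigr (fun j => (row2 th i)^-1 * th i j ^+ 2)); last first.
  by move=> j _; rewrite (row_entry _ _ _ _ j h1) expr2 mulrA.
by rewrite -mulr_sumr -row2_sq expr2 mulKf.
Qed.

Lemma subgrad_le1 th z i : subgrad12 th z -> row2 z i <= 1.
Proof.
move=> /(_ i) [h1 h2]; have [e|ne] := eqVneq (row i th) 0; first exact: h2.
have {}h1 := h1 ne.
have r0 : row2 th i != 0 by apply: contra ne => /eqP/row2_eq0 ->.
rewrite /row2 (eq_bigr (fun j => (row2 th i)^-2 * th i j ^+ 2)); last first.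
  by move=> j _; rewrite (row_entry _ _ _ _ j h1) exprMn exprVn.
by rewrite -mulr_sumr -row2_sq mulVf ?sqrtr1 // expf_neq0.
Qed.

Lemma frob_sq M : frob M ^+ 2 = \sum_i row2 M i ^+ 2.
Proof.
rewrite /frob sqr_sqrtr; last by apply: sumr_ge0 => i _; exact: sumsq_ge0.
by apply: eq_bigr => i _; rewrite row2_sq.
Qed.

Lemma frob_ge0 M : 0 <= frob M.
Proof. exact: sqrtr_ge0. Qed.

Lemma row2_sub A B i : row2 (A - B) i <= row2 A i + row2 B i.
Proof.
rewrite /row2 (eq_bigr (fun j => (A i j - B i j) ^+ 2)); last first.
  by move=> j _; rewrite !mxE.
exact: (mink _ _ (fun j => A i j) (fun j => B i j)).
Qed.

Lemma norm12_sub A B : norm12 (A - B) <= norm12 A + norm12 B.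
Proof. rewrite /norm12 -big_split /=; apply: ler_sum => i _; exact: row2_sub. Qed.


Lemma rowbound (S : {set 'I_p}) (delta : R) th tt zh zt i :
  subgrad12 th zh -> subgrad12 tt zt ->
  (forall i, i \notin S -> row i th = 0) ->
  (i \notin S -> row2 zh i <= 1 - delta) ->
  \sum_j (zh i j - zt i j) * (tt - th) i j <=
    if i \in S then 0 else - (delta * row2 (tt - th) i).
Proof.
move=> sh st h0 hz.
have -> : \sum_j (zh i j - zt i j) * (tt - th) i j =
  \sum_j zh i j * tt i j - \sum_j zh i j * th i j - \sum_j zt i j * tt i j
  + \sum_j zt i j * th i j.
  rewrite -!sumrB -big_split /=; apply: eq_bigr => j _; rewrite !mxE; ring.
rewrite (subgrad_dot _ _ i sh) (subgrad_dot _ _ i st).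
have c1 : \sum_j zh i j * tt i j <= row2 zh i * row2 tt i := cs _ _ _ _.
have c2 : \sum_j zt i j * th i j <= row2 zt i * row2 th i := cs _ _ _ _.
have l1 := subgrad_le1 _ _ i st; have l2 := subgrad_le1 _ _ i sh.
have g1 := row2_ge0 th i; have g2 := row2_ge0 tt i; have g3 := row2_ge0 zh i.
have g4 := row2_ge0 zt i.
case: ifP => iS.
  nra.
have e := h0 i (negbT iS).
have r0 : row2 th i = 0.
  by rewrite /row2 big1 ?sqrtr0 // => j _; rewrite (row0_entry _ _ j e) expr0n.
have r1 : row2 (tt - th) i = row2 tt i.
  by rewrite /row2; congr Num.sqrt; apply: eq_bigr => j _;
     rewrite !mxE (row0_entry _ _ j e) subr0.
have := hz (negbT iS).
rewrite r1 r0; nra.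
Qed.

End M.

Theorem lemma10 (R : realType) (p q n : nat) (S : {set 'I_p})
  (L : 'M[R]_(p, q) -> R) (gradL : 'M[R]_(p, q) -> 'M[R]_(p, q))
  (delta Rad lam alpha1 mu tau1 : R)
  (thetah thetat zh zt : 'M[R]_(p, q)) :
  (0 < n)%N ->
  (forall th : 'M[R]_(p, q), differentiable L th) ->
  (forall th H : 'M[R]_(p, q), 'D_H L th = inner (gradL th) H) ->
  0 < delta -> delta <= 1 -> 0 < Rad -> 0 < lam -> mu <= alpha1 -> 0 < tau1 ->
  norm12 thetah <= Rad -> norm12 thetat <= Rad ->
  (forall i : 'I_p, i \notin S -> row i thetah = 0) ->
  subgrad12 thetah zh -> subgrad12 thetat zt ->
  gradL thetah + lam *: zh = 0 ->
  0 <= inner (gradL thetat + lam *: zt) (thetah - thetat) ->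
  norminf2_out S zh <= 1 - delta ->
  inner (gradL thetat - gradL thetah) (thetat - thetah) >=
    (alpha1 - mu) * frob (thetat - thetah) ^+ 2
    - tau1 * (ln p%:R / n%:R) * norm12 (thetat - thetah) ^+ 2 ->
  lam >= 4 * Rad * tau1 * q%:R * ln p%:R / (delta * n%:R) ->
  norm12 (thetat - thetah) <=
    (4 / delta + 2) * Num.sqrt (#|S|%:R) * frob (thetat - thetah).
Proof.
move=> n0 _ _ d0 d1 R0 l0 am t0 nh nt hS sh st hgh hgt hz hlow hlam.
set nu := thetat - thetah.
have hinn : inner (gradL thetat - gradL thetah) nu <=
    lam * \sum_i \sum_j (zh i j - zt i j) * nu i j.
  move: hgt; rewrite !inner_sum.
  have e : forall i j, gradL thetah i j = - (lam * zh i j).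
    move=> i j; have := congr1 (fun X : 'M[R]_(p, q) => X i j) hgh.
    by rewrite !mxE => /eqP; rewrite addr_eq0 => /eqP.
  move=> hgt; rewrite -subr_ge0.
  have -> : lam * (\sum_i \sum_j (zh i j - zt i j) * nu i j) -
      \sum_i \sum_j (gradL thetat - gradL thetah) i j * nu i j =
      \sum_i \sum_j (gradL thetat + lam *: zt) i j * (thetah - thetat) i j.
    rewrite mulr_sumr -sumrB; apply: eq_bigr => i _.
    rewrite mulr_sumr -sumrB; apply: eq_bigr => j _.
    rewrite /nu !mxE e; ring.
  exact: hgt.
set s := \sum_(i | i \notin S) row2 nu i.
set t := \sum_(i in S) row2 nu i.
have hrow : \sum_i \sum_j (zh i j - zt i j) * nu i j <= - (delta * s).
  have hz' : forall i, i \notin S -> row2 zh i <= 1 - delta.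
    move=> i iS; apply: le_trans hz; rewrite /norminf2_out; exact: (le_bigmax_cond 0 (fun k => row2 zh k) iS).
  apply: (@le_trans _ _ (\sum_i (if i \in S then 0 else - (delta * row2 nu i)))).
    apply: ler_sum => i _; exact: (@rowbound _ _ _ S delta _ _ _ _ i sh st hS (hz' i)).
  rewrite /s big_mkcond mulr_sumr -sumrN le_eqVlt; apply/orP; left; apply/eqP.
  rewrite [RHS]big_mkcond; apply: eq_bigr => i _; by case: ifP.
have hN : norm12 nu = t + s by rewrite /norm12 (bigID (fun i => i \in S)).
have s0 : 0 <= s by apply: sumr_ge0 => i _; exact: row2_ge0.
have F0 : 0 <= frob nu by exact: sqrtr_ge0.
have ht : t <= Num.sqrt (#|S|%:R) * frob nu.
  have c := cs _ (fun i => i \in S) (fun i => row2 nu i) (fun _ => 1).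
  rewrite /= in c.
  have e1 : \sum_(i in S) row2 nu i * 1 = t by apply: eq_bigr => i _; rewrite mulr1.
  have e2 : \sum_(i in S) (1 : R) ^+ 2 = #|S|%:R by rewrite expr1n sumr_const.
  rewrite e1 e2 mulrC in c; apply: le_trans c _.
  apply: ler_wpM2l; first exact: sqrtr_ge0.
  rewrite -(ger0_norm F0) -sqrtr_sqr ler_sqrt ?sqr_ge0 // frob_sq.
  rewrite [leRHS](bigID (fun i => i \in S)) /= lerDl.
  by apply: sumr_ge0 => i _; exact: sqr_ge0.
have hN2 : norm12 nu <= 2 * Rad.
  apply: le_trans (norm12_sub _ _ _ _ _) _; lra.
rewrite -/nu in hlow.
set N := norm12 nu in hN hN2 hlow *.
set c := tau1 * (ln p%:R / n%:R) in hlow.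
set K := Num.sqrt #|S|%:R in ht *.
have t0' : 0 <= t by apply: sumr_ge0 => i _; exact: row2_ge0.
have N0 : 0 <= N by rewrite hN; lra.
have key : lam * delta * s <= c * N ^+ 2.
  have h1 : lam * (\sum_i \sum_j (zh i j - zt i j) * nu i j) <= lam * (- (delta * s)).
    by apply: ler_wpM2l => //; exact: ltW.
  have h2 : 0 <= (alpha1 - mu) * frob nu ^+ 2.
    by apply: mulr_ge0; [rewrite subr_ge0 | exact: sqr_ge0].
  have e : lam * (- (delta * s)) = - (lam * delta * s) by ring.
  lra.
have st' : s <= t.
  have [q0|qpos] := eqVneq q 0%N.
    have -> : s = 0; last by [].
    rewrite /s big1 // => i _; rewrite /row2 big1 ?sqrtr0 // => j _.
    by exfalso; move: (ltn_ord j); rewrite {2}q0.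
  have Lg : 0 <= ln (p%:R : R).
    have [p0|ppos] := eqVneq p 0%N.
      by rewrite p0 ln0.
    by apply: ln_ge0; rewrite ler1n lt0n.
  have nR : 0 < (n%:R : R) by rewrite ltr0n.
  have c0 : 0 <= c by apply: mulr_ge0; [exact: ltW | exact: divr_ge0 => //; exact: ltW].
  have qR : 1 <= (q%:R : R) by rewrite ler1n lt0n.
  have h4 : 4 * Rad * c <= lam * delta.
    have e : 4 * Rad * c = (4 * Rad * tau1 * ln (p%:R : R)) / n%:R.
      by rewrite /c; field; rewrite gt_eqF.
    rewrite e ler_pdivrMr //.
    rewrite ler_pdivrMr ?mulr_gt0 // in hlam.
    have g : 0 <= 4 * Rad * tau1 * ln (p%:R : R).
      by rewrite !mulr_ge0 // ltW.
    have gq : 4 * Rad * tau1 * ln (p%:R : R) <= 4 * Rad * tau1 * ln (p%:R : R) * q%:R.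
      by rewrite ler_peMr.
    have e2 : lam * delta * n%:R = lam * (delta * n%:R) by ring.
    have e3 : 4 * Rad * tau1 * q%:R * ln (p%:R : R) = 4 * Rad * tau1 * ln (p%:R : R) * q%:R by ring.
    rewrite e2; apply: le_trans gq _; by rewrite -e3.
  rewrite leNgt; apply/negP => ts.
  have h5 : c * N ^+ 2 <= 2 * Rad * c * N.
    have hh : 0 <= 2 * Rad - N by rewrite subr_ge0.
    have := mulr_ge0 (mulr_ge0 c0 N0) hh; nra.
  have h6 : 4 * Rad * c * s <= lam * delta * s by apply: ler_wpM2r.
  have h7 : Rad * c * (s - t) <= 0 by rewrite hN in h5; nra.
  have st0 : 0 < s - t by rewrite subr_gt0.
  have h8 : Rad * c <= 0.
    by rewrite -(pmulr_lle0 _ st0).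
  have c00 : c = 0.
    apply/eqP; rewrite eq_le c0 andbT.
    by rewrite -(pmulr_rle0 _ R0).
  rewrite c00 mul0r in key.
  have ld : 0 < lam * delta by rewrite mulr_gt0.
  have : lam * delta * s <= 0 by [].
  rewrite pmulr_rle0 //; lra.
have KF : 0 <= K * frob nu := mulr_ge0 (sqrtr_ge0 _) F0.
have dd : 0 <= 4 / delta by rewrite divr_ge0 // ltW.
have h9 : 0 <= 4 / delta * (K * frob nu) := mulr_ge0 dd KF.
have -> : (4 / delta + 2) * K * frob nu = 4 / delta * (K * frob nu) + 2 * (K * frob nu) by ring.
rewrite hN; lra.
Qed.
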